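(* Let $a^*\in A$ be a pure strategy profile of $G$. If for every $\bar p\in(0,1)$ there exists $p\in(\bar p,1)$ such that $a^*$ is stable for the degree of observability $p$, then $a^*$ is weakly Pareto efficient with respect to $\pi$.
   Context: Objective game: $G=(N,A,\pi)$ is a finite $n$-player normal-form game, $N=\{1,\dots,n\}$, finite action sets $A_i$, $A=\prod_iA_i$, fitness functions $\pi_i:A\to\mathbb{R}$ extended multilinearly to $\prod_i\Delta(A_i)$. $\sigma$ strongly Pareto dominates $\sigma'$ if $\pi_i(\sigma)>\pi_i(\sigma')$ for all $i$; $\sigma$ is weakly Pareto efficient if no profile in $\prod_i\Delta(A_i)$ strongly Pareto dominates it. Preference types: $\Theta=\mathbb{R}^A$ (extended multilinearly). $\mathcal{M}(\Theta^n)$: product distributions $\mu=\mu_1\times\dots\times\mu_n$ with finitely supported marginals; $\operatorname{supp}\mu=\prod_i\operatorname{supp}\mu_i$, $\mu(\theta)=\prod_i\mu_i(\theta_i)$, $\mu_{-i}(\theta_{-i})=\prod_{j\ne i}\mu_j(\theta_j)$. Mutants: for nonempty $J\subseteq N$, $\tilde\theta_J\in\prod_{j\in J}(\Theta\setminus\operatorname{supp}\mu_j)$ with shares $\varepsilon\in(0,1)^{|J|}$, $\|\varepsilon\|=\max_j\varepsilon_j$; post-entry $\tilde\mu^\varepsilon_i=(1-\varepsilon_i)\mu_i+\varepsilon_i\delta_{\tilde\theta_i}$ for $i\in J$, $\mu_i$ otherwise. Partial observability with degree $p\in(0,1)$: each player independently observes opponents' types with probability $p$ and otherwise knows only $\mu_{-i}$.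 Strategies: $b:\operatorname{supp}\mu\to\prod_i\Delta(A_i)$ (play when observing) and $s_i:\operatorname{supp}\mu_i\to\Delta(A_i)$ (play when not observing), $s(\theta)=(s_i(\theta_i))_i$. For a matched profile $\theta$ and the set $T\subseteq N$ of non-observing players, the profile played is $(s(\theta)_T,b(\theta)_{-T})$. $(b,s)$ is an equilibrium if for all $\theta\in\operatorname{supp}\mu$ and $i$: $b_i(\theta)\in\arg\max_{\sigma_i}\sum_{T\subseteq N\setminus\{i\}}p^{n-1-|T|}(1-p)^{|T|}\theta_i(\sigma_i,(s_{-i}(\theta_{-i})_T,b_{-i}(\theta)_{-T}))$ and $s_i(\theta_i)\in\arg\max_{\sigma_i}\sum_{\theta'_{-i}}\mu_{-i}(\theta'_{-i})\sum_{T\subseteq N\setminus\{i\}}p^{n-1-|T|}(1-p)^{|T|}\theta_i(\sigma_i,(s_{-i}(\theta'_{-i})_T,b_{-i}(\theta_i,\theta'_{-i})_{-T}))$; $B_p(\mu)$ is the set of these; $(\mu,b,s)$ is a configuration. Aggregate outcome: $\varphi_{\mu,b,s}(a)=\sum_{\theta}\mu(\theta)\sum_{T\subseteq N}p^{n-|T|}(1-p)^{|T|}\prod_i(s(\theta)_T,b(\theta)_{-T})_i(a_i)$. Average fitness: $\Pi_{\theta_i}(\mu;b,s)=\sum_{\theta'_{-i}}\mu_{-i}(\theta'_{-i})\sum_{T\subseteq N}p^{n-|T|}(1-p)^{|T|}\pi_i(s(\theta_i,\theta'_{-i})_T,b(\theta_i,\theta'_{-i})_{-T})$. Balanced: equal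 average fitness of all types within each population. Nearby set: $B_p^\eta(\tilde\mu^\varepsilon;b,s)=\{(\tilde b,\tilde s)\in B_p(\tilde\mu^\varepsilon):\max_i\|\tilde b_i(\theta)-b_i(\theta)\|\le\eta,\ \max_i\|\tilde s_i(\theta_i)-s_i(\theta_i)\|\le\eta\ \forall\theta\in\operatorname{supp}\mu\}$. $(\mu,b,s)$ is stable (for degree $p$) if balanced and for every nonempty $J$, every $\tilde\theta_J$, every $\eta>0$, there are $\bar\eta\in[0,\eta)$, $\bar\epsilon\in(0,1)$ such that for all $\varepsilon$ with $\|\varepsilon\|\in(0,\bar\epsilon)$, $B_p^{\bar\eta}(\tilde\mu^\varepsilon;b,s)\ne\emptyset$ and each of its elements satisfies (i) some $j\in J$ has $\Pi_{\theta_j}>\Pi_{\tilde\theta_j}$ (post-entry) for all $\theta_j\in\operatorname{supp}\mu_j$, or (ii) for every $i$ all types in $\operatorname{supp}\tilde\mu^\varepsilon_i$ have equal post-entry average fitness. A pure profile $a^*$ is stable for degree $p$ if the point mass at $a^*$ is the aggregate outcome of a stable configuration for $p$. *)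

(* Defs.v *)
From HB Require Import structures.
From mathcomp Require Import all_boot all_order all_algebra.
Set Implicit Arguments. Unset Strict Implicit. Unset Printing Implicit Defensive.
Import Order.TTheory GRing.Theory Num.Theory.
Local Open Scope ring_scope.

Section Game.
Variable R : realFieldType.
Variable n : nat.
Variable Act : 'I_n -> finType.

Definition prof := {dffun forall i : 'I_n, Act i}.
Definition mstrat (i : 'I_n) := {ffun Act i -> R}.
Definition mprof := forall i : 'I_n, mstrat i.
Definition is_mixed (i : 'I_n) (x : mstrat i) :=
  (forall a, 0 <= x a) /\ \sum_a x a = 1.
Definition is_mprof (s : mprof) := forall i, is_mixed (s i).

Definition mlin (u : prof -> R) (s : mprof) : R :=
  \sum_(a : prof) (\prod_(j < n) s j (a j)) * u a.
Definition mlin_dev (u : prof -> R) (i : 'I_n) (x : mstrat i) (s : mprof) : R :=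
  \sum_(a : prof) (x (a i) * \prod_(j < n | j != i) s j (a j)) * u a.

Definition pure (a : prof) : mprof :=
  fun j => [ffun x => if x == a j then 1 else 0].

Definition strongly_dominates (pi : 'I_n -> prof -> R) (s s' : mprof) :=
  forall i, mlin (pi i) s' < mlin (pi i) s.
Definition weakly_pareto (pi : 'I_n -> prof -> R) (s : mprof) :=
  ~ exists s', is_mprof s' /\ strongly_dominates pi s' s.

Definition theta := {ffun prof -> R}.
Record fdist := FDist { fsupp : seq theta; fwt : theta -> R }.
Definition is_fdist (m : fdist) :=
  [/\ uniq (fsupp m), (forall t, t \in fsupp m -> 0 < fwt m t)
    & \sum_(t <- fsupp m) fwt m t = 1].
(* product distribution mu = mu_1 x ... x mu_n, given by its marginals *)
Definition popstate := 'I_n -> fdist.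
Definition is_popstate (mu : popstate) := forall i, is_fdist (mu i).
Definition tprof := 'I_n -> theta.
Definition in_supp (mu : popstate) (th : tprof) := forall i, th i \in fsupp (mu i).

(* sum over the types of the players in S drawn from prod_{j in S} supp mu_j,
   weighted by prod_{j in S} mu_j(th_j); players outside S have type th0 j *)
Definition texp (mu : popstate) (S : {set 'I_n}) (th0 : tprof) (F : tprof -> R) : R :=
  \sum_(k : {dffun forall j : 'I_n,
          'I_(if j \in S then size (fsupp (mu j)) else 1%N)})
    (\prod_(j in S) fwt (mu j) (nth (th0 j) (fsupp (mu j)) (k j))) *
    F (fun j => if j \in S then nth (th0 j) (fsupp (mu j)) (k j) else th0 j).

Definition bstrat := tprof -> mprof.                 (* b : play when observing *)
Definition sstrat := forall j : 'I_n, theta -> mstrat j. (* s : play when not observing *)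

Definition play (b : bstrat) (s : sstrat) (th : tprof) (T : {set 'I_n}) : mprof :=
  fun j => if j \in T then s j (th j) else b th j.

Definition pr (p : R) (m k : nat) : R := p ^+ (m - k) * (1 - p) ^+ k.

Definition U_obs (p : R) (b : bstrat) (s : sstrat) (i : 'I_n) (th : tprof) (x : mstrat i) : R :=
  \sum_(T : {set 'I_n} | T \subset ~: [set i])
     pr p n.-1 #|T| * mlin_dev (th i) x (play b s th T).

Definition U_nobs (p : R) (mu : popstate) (b : bstrat) (s : sstrat) (i : 'I_n)
    (t : theta) (x : mstrat i) : R :=
  texp mu (~: [set i]) (fun _ => t) (fun th =>
    \sum_(T : {set 'I_n} | T \subset ~: [set i])
      pr p n.-1 #|T| * mlin_dev t x (play b s th T)).

Definition is_eq (p : R) (mu : popstate) (b : bstrat) (s : sstrat) :=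
  [/\ (forall th, in_supp mu th -> is_mprof (b th)),
      (forall i t, t \in fsupp (mu i) -> is_mixed (s i t)),
      (forall th, in_supp mu th -> forall i (x : mstrat i), is_mixed x ->
          U_obs p b s th x <= U_obs p b s th (b th i))
    & (forall i t, t \in fsupp (mu i) -> forall x : mstrat i, is_mixed x ->
          U_nobs p mu b s t x <= U_nobs p mu b s t (s i t))].

Definition outcome (p : R) (mu : popstate) (b : bstrat) (s : sstrat) (a : prof) : R :=
  texp mu setT (fun _ => [ffun _ => 0]) (fun th =>
    \sum_(T : {set 'I_n}) pr p n #|T| * \prod_(j < n) play b s th T j (a j)).

Definition avgfit (pi : 'I_n -> prof -> R) (p : R) (mu : popstate) (b : bstrat)
    (s : sstrat) (i : 'I_n) (t : theta) : R :=
  texp mu (~: [set i]) (fun _ => t) (fun th =>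
    \sum_(T : {set 'I_n}) pr p n #|T| * mlin (pi i) (play b s th T)).

Definition balanced pi p mu b s :=
  forall i t t', t \in fsupp (mu i) -> t' \in fsupp (mu i) ->
    avgfit pi p mu b s i t = avgfit pi p mu b s i t'.

Definition postentry (mu : popstate) (J : {set 'I_n}) (mt : tprof) (eps : 'I_n -> R) : popstate :=
  fun i => if i \in J then
     FDist (rcons (fsupp (mu i)) (mt i))
           (fun t => if t == mt i then eps i else (1 - eps i) * fwt (mu i) t)
   else mu i.

Definition near (eta : R) (mu : popstate) (b : bstrat) (s : sstrat) (bt : bstrat) (st : sstrat) :=
  (forall th, in_supp mu th -> forall i a, `|bt th i a - b th i a| <= eta) /\
  (forall i t, t \in fsupp (mu i) -> forall a, `|st i t a - s i t a| <= eta).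

Definition stable (pi : 'I_n -> prof -> R) (p : R) (mu : popstate) (b : bstrat) (s : sstrat) :=
  [/\ is_popstate mu, is_eq p mu b s, balanced pi p mu b s &
  forall J : {set 'I_n}, J != set0 ->
  forall mt : tprof, (forall j, j \in J -> mt j \notin fsupp (mu j)) ->
  forall eta : R, 0 < eta ->
  exists etab epsb : R, [/\ 0 <= etab < eta, 0 < epsb < 1 &
  forall eps : 'I_n -> R,
    (forall j, j \in J -> 0 < eps j < 1) -> (forall j, j \in J -> eps j < epsb) ->
    (exists bt st, is_eq p (postentry mu J mt eps) bt st /\ near etab mu b s bt st) /\
    (forall bt st, is_eq p (postentry mu J mt eps) bt st -> near etab mu b s bt st ->
       (exists2 j, j \in J & forall t, t \in fsupp (mu j) ->
          avgfit pi p (postentry mu J mt eps) bt st j (mt j)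
            < avgfit pi p (postentry mu J mt eps) bt st j t)
       \/ balanced pi p (postentry mu J mt eps) bt st)]].

Definition stable_pure (pi : 'I_n -> prof -> R) (p : R) (astar : prof) :=
  exists mu b s, stable pi p mu b s /\
    forall a, outcome p mu b s a = (if a == astar then 1 else 0).

End Game.

(* Main.v *)
Require Import Defs.
From HB Require Import structures.
From mathcomp Require Import all_boot all_order all_algebra ring lra zify.
From Stdlib Require Import FunctionalExtensionality.
Import Order.TTheory GRing.Theory Num.Theory.
Set Implicit Arguments. Unset Strict Implicit. Unset Printing Implicit Defensive.
Local Open Scope ring_scope.

Section Dist.
Variable R : realFieldType.
Variable n : nat.
Variable Act : 'I_n -> finType.

Lemma dist_gen (F : forall i : 'I_n, Act i -> R) (r : seq 'I_n) :
  uniq r -> forall a0 : (forall i, Act i),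
  \sum_(a : prof Act | [forall i, (i \notin r) ==> (a i == a0 i)])
     \prod_(i <- r) F i (a i) = \prod_(i <- r) \sum_(x : Act i) F i x.
Proof.
elim: r => [_ a0 | j r IH /= /andP [jr ur] a0].
  rewrite big_nil (big_pred1 (finfun a0 : prof Act)) ?big_nil // => a /=.
  apply/forallP/eqP => [H | ->].
    by apply/ffunP => i; rewrite ffunE; move: (H i) => /= /eqP.
  by move=> i; rewrite ffunE.
rewrite (partition_big (fun a : prof Act => a j) xpredT) //=.
under eq_bigr => x _.
  rewrite (eq_bigl (fun a : prof Act =>
      [forall i, (i \notin r) ==> (a i == dfwith a0 x i)])); last first.
    move=> a /=; apply/andP/forallP => [[/forallP H1 /eqP H2] i | H].
      case: (dfwithP a0 x i) => [|i' ji']; first by rewrite H2 eqxx implybT.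
      apply/implyP => ir; move: (H1 i'); rewrite in_cons negb_or ir andbT.
      by rewrite eq_sym ji'.
    split.
      apply/forallP => i; apply/implyP; rewrite in_cons negb_or => /andP [ij ir].
      by move: (H i); rewrite ir /= dfwith_out // eq_sym.
    by move: (H j); rewrite jr /= dfwith_in.
  under eq_bigr => a /forallP Ha.
    rewrite big_cons.
    have -> : a j = x.
      by move: (Ha j); rewrite jr /= dfwith_in => /eqP.
  over.
  rewrite -big_distrr /= IH //.
over.
by rewrite big_cons -big_distrl.
Qed.

Lemma dist (a0 : prof Act) (F : forall i : 'I_n, Act i -> R) :
  \sum_(a : prof Act) \prod_(i < n) F i (a i) = \prod_(i < n) \sum_(x : Act i) F i x.
Proof.
rewrite -(dist_gen F (index_enum_uniq _) a0).
by apply: eq_bigl => a; apply/esym/forallP => i; rewrite mem_index_enum.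
Qed.

Local Notation prof := (prof Act).
Local Notation mprof := (mprof R Act).
Local Notation mstrat := (mstrat R Act).
Local Notation theta := (theta R Act).

Lemma mixed_le1 i (x : mstrat i) y : is_mixed x -> x y <= 1.
Proof.
move=> [H0 H1]; rewrite -H1 (bigD1 y) //= lerDl sumr_ge0 // => z _; exact: H0.
Qed.

Lemma prod_mixed_ge0 (m : mprof) (a : prof) : is_mprof m -> 0 <= \prod_j m j (a j).
Proof. move=> Hm; apply: prodr_ge0 => j _; exact: (Hm j).1. Qed.

Lemma prod_mixed_le1 (m : mprof) (a : prof) : is_mprof m -> \prod_j m j (a j) <= 1.
Proof.
move=> Hm; apply: prodr_ile1 => j _; rewrite (Hm j).1 /=; exact: mixed_le1.
Qed.

Lemma sum_prod_mixed (a0 : prof) (m : mprof) : is_mprof m ->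
  \sum_(a : prof) \prod_j m j (a j) = 1.
Proof. move=> Hm; rewrite (dist a0 (fun j y => m j y)); apply: big1 => j _; exact: (Hm j).2. Qed.

Lemma mlin_dev_const (a0 : prof) (c : R) (t : theta) i (x : mstrat i) (s : mprof) :
  (forall a, t a = c) -> is_mixed x -> is_mprof s -> mlin_dev t x s = c.
Proof.
move=> Ht Hx Hs; rewrite /mlin_dev.
under eq_bigr => a _ do rewrite Ht.
rewrite -big_distrl /=.
suff -> : \sum_(a : prof) x (a i) * \prod_(j < n | j != i) s j (a j) = 1 by rewrite mul1r.
have Hm : is_mprof (dfwith s x).
  by move=> j; case: dfwithP => // ? _; exact: Hs.
transitivity (\sum_(a : prof) \prod_j dfwith s x j (a j)); last exact: (sum_prod_mixed a0 (m := dfwith s x) Hm).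
apply: eq_bigr => a _.
rewrite [in RHS](bigD1 i) //= dfwith_in; congr (_ * _); apply: eq_bigr => j ji.
by rewrite dfwith_out // eq_sym.
Qed.

Lemma pure_mixed (a : prof) i : is_mixed (pure R a i).
Proof.
split=> [y|]; first by rewrite /pure ffunE; case: eqP.
rewrite (bigD1 (a i)) //= /pure ffunE eqxx big1 ?addr0 // => y /negbTE.
by rewrite ffunE => ->.
Qed.

Lemma pure_of_prod (a0 : prof) (m : mprof) : is_mprof m ->
  (forall a, a != a0 -> \prod_j m j (a j) = 0) -> forall j, m j = pure R a0 j.
Proof.
move=> Hm H.
have Hp : \prod_j m j (a0 j) = 1.
  have := sum_prod_mixed a0 Hm; rewrite (bigD1 a0) //= [X in _ + X = _]big1 ?addr0 //.
have H1 : forall j, m j (a0 j) = 1.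
  move=> j; apply/eqP; rewrite eq_le mixed_le1 //=.
  rewrite -Hp (bigD1 j) //= ler_piMr //; first exact: (Hm j).1.
  apply: prodr_ile1 => k _; rewrite (Hm k).1 /=; exact: mixed_le1.
move=> j; apply/ffunP => y; rewrite /pure ffunE; case: eqP => [->|/eqP yn]; first exact: H1.
have := (Hm j).2; rewrite (bigD1 (a0 j)) //= H1 -{2}(addr0 1) => /addrI Hs.
exact: (psumr_eq0P (fun y _ => (Hm j).1 y) Hs).
Qed.

Lemma mlin_bound (u : prof -> R) (m : mprof) : is_mprof m ->
  `|mlin u m| <= \sum_a `|u a|.
Proof.
move=> Hm; rewrite /mlin; apply: le_trans (ler_norm_sum _ _ _) _.
apply: ler_sum => a _; rewrite normrM ger0_norm ?prod_mixed_ge0 //.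
by apply: ler_piMl => //; exact: prod_mixed_le1.
Qed.

Local Notation popstate := (popstate R Act).
Local Notation tprof := (tprof R Act).

Definition kT (mu : popstate) (S : {set 'I_n}) :=
  {dffun forall j : 'I_n, 'I_(if j \in S then size (fsupp (mu j)) else 1%N)}.
Definition tw (mu : popstate) S (th0 : tprof) (k : kT mu S) : R :=
  \prod_(j in S) fwt (mu j) (nth (th0 j) (fsupp (mu j)) (k j)).
Definition tth (mu : popstate) S (th0 : tprof) (k : kT mu S) : tprof :=
  fun j => if j \in S then nth (th0 j) (fsupp (mu j)) (k j) else th0 j.

Lemma texpE mu S th0 F :
  texp mu S th0 F = \sum_(k : kT mu S) tw th0 k * F (tth th0 k).
Proof. by []. Qed.

Lemma k_lt mu S (k : kT mu S) j : j \in S -> (k j < size (fsupp (mu j)))%N.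
Proof. move=> jS; have := ltn_ord (k j); move: (nat_of_ord (k j)) => m. by rewrite jS. Qed.

Lemma tth_supp mu S th0 (k : kT mu S) j : j \in S -> tth th0 k j \in fsupp (mu j).
Proof. by move=> jS; rewrite /tth (ifT _ _ jS) mem_nth // k_lt. Qed.

Lemma tth_out mu S th0 (k : kT mu S) j : j \notin S -> tth th0 k j = th0 j.
Proof. by move=> jS; rewrite /tth (ifN _ _ jS). Qed.

Definition wpos (mu : popstate) (S : {set 'I_n}) :=
  forall j, j \in S -> forall t, t \in fsupp (mu j) -> 0 < fwt (mu j) t.

Lemma tw_gt0 mu S th0 (k : kT mu S) : wpos mu S -> 0 < tw th0 k.
Proof.
move=> H; apply: prodr_gt0 => j jS; apply: H => //.
by rewrite mem_nth // k_lt.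
Qed.

Lemma tw_indep mu S th0 th0' (k : kT mu S) : tw th0 k = tw th0' k.
Proof.
apply: eq_bigr => j jS; by rewrite (set_nth_default (th0' j)) // k_lt.
Qed.

Lemma texp_le mu S th0 F G : wpos mu S ->
  (forall k : kT mu S, F (tth th0 k) <= G (tth th0 k)) ->
  texp mu S th0 F <= texp mu S th0 G.
Proof.
move=> Hw H; rewrite !texpE; apply: ler_sum => k _.
by apply: ler_wpM2l; [exact: ltW (tw_gt0 _ _ Hw) | exact: H].
Qed.

Lemma texp_eq mu S th0 F G :
  (forall k : kT mu S, F (tth th0 k) = G (tth th0 k)) ->
  texp mu S th0 F = texp mu S th0 G.
Proof. by move=> H; rewrite !texpE; apply: eq_bigr => k _; rewrite H. Qed.

Lemma texp_lt mu S th0 F G (k0 : kT mu S) : wpos mu S ->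
  (forall k : kT mu S, F (tth th0 k) <= G (tth th0 k)) ->
  F (tth th0 k0) < G (tth th0 k0) ->
  texp mu S th0 F < texp mu S th0 G.
Proof.
move=> Hw H H0; rewrite !texpE (bigD1 k0) //= [X in _ < X](bigD1 k0) //=.
apply: ltr_leD; first by rewrite ltr_pM2l // tw_gt0.
apply: ler_sum => k _.
by apply: ler_wpM2l; [exact: ltW (tw_gt0 _ _ Hw) | exact: H].
Qed.

Lemma texp_const (mu : popstate) (S : {set 'I_n}) (th0 th0' : tprof) (c : R) :
  texp mu S th0 (fun _ => c) = texp mu S th0' (fun _ => c).
Proof. by rewrite !texpE; apply: eq_bigr => k _; rewrite (tw_indep th0 th0'). Qed.


Lemma mu_wpos (mu : popstate) S : is_popstate mu -> wpos mu S.
Proof. by move=> Hmu j _ t; have [_ H _] := Hmu j; exact: H. Qed.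

Lemma post_wpos (mu : popstate) (mt : tprof) (eps : 'I_n -> R) S :
  is_popstate mu -> (forall j, 0 < eps j < 1) -> wpos (postentry mu setT mt eps) S.
Proof.
move=> Hmu He j _ t; rewrite /postentry in_setT /= mem_rcons in_cons.
have [e0 e1] := andP (He j).
case: eqP => [-> _|_ /= tS] //.
apply: mulr_gt0; first by rewrite subr_gt0.
by have [_ H _] := Hmu j; exact: H.
Qed.

Lemma pr_gt0 (p : R) m k : 0 < p < 1 -> 0 < pr p m k.
Proof. by case/andP => p0 p1; rewrite /pr mulr_gt0 // exprn_gt0 // subr_gt0. Qed.

Lemma pr_le (p : R) m k : 1/2 <= p -> p < 1 -> (0 < k)%N -> (k <= m)%N ->
  pr p m k <= p ^+ m.-1 * (1 - p).
Proof.
move=> ph p1; case: k => // k _ km; rewrite /pr exprS.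
have q0 : 0 <= 1 - p by lra.
have qp : 1 - p <= p by lra.
have p0 : 0 <= p by lra.
have -> : m.-1 = (m - k.+1 + k)%N by lia.
rewrite exprD -mulrA ler_wpM2l ?exprn_ge0 // mulrC ler_wpM2r //.
by rewrite lerXn2r // nnegrE.
Qed.

Lemma play_mixed (b : bstrat R Act) s th T :
  (forall j, is_mixed (b th j)) -> (forall j, is_mixed (s j (th j))) ->
  is_mprof (play b s th T).
Proof. by move=> Hb Hs j; rewrite /play; case: ifP. Qed.

Lemma outcome_pure (p : R) (mu : popstate) b s (astar : prof) :
  0 < p < 1 -> is_popstate mu -> is_eq p mu b s ->
  (forall a, outcome p mu b s a = (if a == astar then 1 else 0)) ->
  forall th, in_supp mu th -> forall T j, play b s th T j = pure R astar j.
Proof.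
move=> Hp Hmu [Hb Hs _ _] Hout th Hth T.
have Hpl : forall th', in_supp mu th' -> forall T', is_mprof (play b s th' T').
  move=> th' H' T' j; rewrite /play; case: ifP => _; [exact: Hs | exact: Hb].
apply: (pure_of_prod (Hpl _ Hth T)) => a aa.
have := Hout a; rewrite (negbTE aa) /outcome texpE => Hsum.
have Hk : forall j, (index (th j) (fsupp (mu j)) <
     (if j \in setT then size (fsupp (mu j)) else 1))%N.
  by move=> j; rewrite in_setT index_mem.
pose k : kT mu setT := finfun (fun j => Ordinal (Hk j)).
have Hth' : tth (fun _ => [ffun _ => 0]) k = th.
  apply: functional_extensionality => j; rewrite /tth ffunE /= in_setT nth_index //.
have Hnn : forall k' : kT mu setT, 0 <= tw (fun _ => [ffun _ => 0]) k' *
   (\sum_(T : {set 'I_n}) pr p n #|T| *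
        \prod_(j < n) play b s (tth (fun _ => [ffun _ => 0]) k') T j (a j)).
  move=> k'; apply: mulr_ge0; first by apply: ltW; apply: tw_gt0; apply: mu_wpos.
  apply: sumr_ge0 => T' _; apply: mulr_ge0; first exact/ltW/pr_gt0.
  apply: prod_mixed_ge0; apply: Hpl => j; apply: tth_supp; exact: in_setT.
have H00 := psumr_eq0P (fun k' _ => Hnn k') Hsum.
have := H00 k isT.
have twp : 0 < tw (fun _ => [ffun _ => 0]) k by apply: tw_gt0; apply: mu_wpos.
move/eqP; rewrite mulf_eq0 (gt_eqF twp) /= Hth' => /eqP Hs0.
have Hnn2 : forall T' : {set 'I_n}, 0 <= pr p n #|T'| * \prod_(j < n) play b s th T' j (a j).
  move=> T'; apply: mulr_ge0; first exact/ltW/pr_gt0.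
  by apply: prod_mixed_ge0; apply: Hpl.
have H01 := psumr_eq0P (fun T' _ => Hnn2 T') Hs0.
have := H01 T isT.
have prp : 0 < pr p n #|T| by apply: pr_gt0.
by move/eqP; rewrite mulf_eq0 (gt_eqF prp) /= => /eqP.
Qed.

Lemma U_obs_pure (p : R) (b : bstrat R Act) s th i (x : mstrat i) (astar : prof) :
  (forall T, play b s th T = pure R astar) ->
  U_obs p b s th x = \sum_(T : {set 'I_n} | T \subset ~: [set i])
      pr p n.-1 #|T| * mlin_dev (th i) x (pure R astar).
Proof. by move=> H; rewrite /U_obs; apply: eq_bigr => T _; rewrite H. Qed.

Lemma sum_const_mul (I : finType) (P : pred I) (X : R) :
  \sum_(i | P i) X = X * \sum_(i | P i) (1:R).
Proof. by rewrite big_distrr; apply: eq_bigr => i _; rewrite /= mulr1. Qed.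

Lemma arith1 (X M : R) : 0 <= X -> - (X * (1 + M)) <= - X * M.
Proof. move=> ?; nra. Qed.

End Dist.

Unset Implicit Arguments.
Set Strict Implicit.

Theorem mainTheorem14 (R : realFieldType) (n : nat) (Act : 'I_n -> finType)
  (pi : 'I_n -> prof Act -> R) (astar : prof Act) :
  (0 < n)%N ->
  (forall pbar : R, 0 < pbar < 1 ->
     exists p : R, pbar < p < 1 /\ stable_pure pi p astar) ->
  weakly_pareto pi (pure R astar).
Proof.
move=> n0 Hst [sig [Hsig Hdom]].
pose i0 : 'I_n := Ordinal n0.
pose d j := mlin (pi j) sig - mlin (pi j) (pure R astar).
have dpos : forall j, 0 < d j by move=> j; rewrite subr_gt0; exact: Hdom.
pose del := \big[Order.min/1]_(j < n) d j.
have delpos : 0 < del by apply: lt_bigmin => [|j _]; [exact: ltr01 | exact: dpos].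
have deld : forall j, del <= d j by move=> j; exact: bigmin_le.
pose K := \sum_(j < n) \sum_(a : prof Act) `|pi j a|.
have HK : forall j (m : mprof R Act), is_mprof m -> `|mlin (pi j) m| <= K.
  move=> j m Hm; apply: le_trans (mlin_bound _ Hm) _.
  rewrite /K (bigD1 j) //= lerDl; apply: sumr_ge0 => i _; exact: sumr_ge0.
have K0 : 0 <= K by apply: sumr_ge0 => i _; exact: sumr_ge0.
pose N2 : R := \sum_(T : {set 'I_n}) (1 : R).
have N20 : 0 <= N2 by apply: sumr_ge0 => T _; exact: ler01.
pose c := 4 * N2 * K.
have c0 : 0 <= c by rewrite /c !mulr_ge0.
pose q := del / (c + 2 * del).
have cd : 0 < c + 2 * del by lra.
have q0 : 0 < q by exact: divr_gt0.
have qe : q * (c + 2 * del) = del by rewrite /q divfK // gt_eqF.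
have qh : q <= 1/2 by nra.
have Hpbar : 0 < 1 - q < 1 by apply/andP; split; lra.
have [p [/andP [pb p1] Hsp]] := Hst (1 - q) Hpbar.
have ph : 1/2 <= p by lra.
have key : (1 - p) * c < del by nra.
have p0 : 0 < p by lra.
have Hp : 0 < p < 1 by apply/andP; split.
case: Hsp => mu [b [s [[Hmu Heq Hbal Hstab] Hout]]].
have Hpure := outcome_pure Hp Hmu Heq Hout.
pose hd j := head [ffun _ => 0] (fsupp (mu j)).
have hd_in : forall j, hd j \in fsupp (mu j).
  move=> j; have [_ _ Hs1] := Hmu j; move: Hs1; rewrite /hd.
  case: (fsupp (mu j)) => [|t l]; last by rewrite mem_head.
  by rewrite big_nil => /eqP; rewrite eq_sym oner_eq0.
pose thw j t : tprof R Act := fun k => if k == j then t else hd k.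
have thw_in : forall j t, t \in fsupp (mu j) -> in_supp mu (thw j t).
  by move=> j t Ht k; rewrite /thw; case: eqP => [->|_].
have Hplay_pure : forall th, in_supp mu th -> forall T, play b s th T = pure R astar.
  by move=> th Hth T; apply: functional_extensionality_dep => j; exact: Hpure.
have Hb_pure : forall th, in_supp mu th -> b th = pure R astar.
  move=> th Hth; apply: functional_extensionality_dep => j.
  by have := Hpure th Hth set0 j; rewrite /play in_set0.
have Hs_pure : forall j t, t \in fsupp (mu j) -> s j t = pure R astar j.
  move=> j t Ht; have := Hpure (thw j t) (thw_in j t Ht) setT j.
  by rewrite /play in_setT /thw eqxx.
have Hinc : forall i t, t \in fsupp (mu i) -> forall x : mstrat R Act i, is_mixed x ->
   \sum_(T : {set 'I_n} | T \subset ~: [set i]) pr p n.-1 #|T| * mlin_dev t x (pure R astar) <=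
   \sum_(T : {set 'I_n} | T \subset ~: [set i]) pr p n.-1 #|T| * mlin_dev t (pure R astar i) (pure R astar).
  move=> i t Ht x Hx; have [_ _ HU _] := Heq.
  have Hth := thw_in i t Ht.
  have := HU _ Hth i x Hx.
  rewrite !(U_obs_pure _ _ (Hplay_pure _ Hth)) (Hb_pure _ Hth).
  by rewrite /thw eqxx.
pose cm j := 1 + \sum_(t <- fsupp (mu j)) `|t astar|.
pose mt : tprof R Act := fun j => [ffun _ => cm j].
have Hmt : forall j, mt j \notin fsupp (mu j).
  move=> j; apply/negP => Hin.
  have : `|mt j astar| <= \sum_(t <- fsupp (mu j)) `|t astar|.
    by rewrite (big_rem _ Hin) /= lerDl sumr_ge0.
  have S0 : 0 <= \sum_(t <- fsupp (mu j)) `|t astar| by exact: sumr_ge0.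
  rewrite /mt ffunE /cm ger0_norm; lra.
have Hne_mt : forall j t, t \in fsupp (mu j) -> t != mt j.
  by move=> j t Ht; apply/eqP => E; move: (Hmt j); rewrite -E Ht.
have HJ : [set: 'I_n] != set0 by apply/set0Pn; exists i0; rewrite in_setT.
have [etab [epsb [/andP [e0 _] /andP [eb0 eb1] Hall]]] :=
  Hstab setT HJ mt (fun j _ => Hmt j) 1 ltr01.
pose eps : 'I_n -> R := fun _ => epsb / 2.
have Heps : forall j, 0 < eps j < 1 by move=> j; apply/andP; rewrite /eps; split; lra.
have Heps2 : forall j, j \in [set: 'I_n] -> eps j < epsb by move=> j _; rewrite /eps; lra.
have [_ Hcl] := Hall eps (fun j _ => Heps j) Heps2.
pose post := postentry mu setT mt eps.
have Hpost_supp : forall j t, (t \in fsupp (post j)) = (t == mt j) || (t \in fsupp (mu j)).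
  by move=> j t; rewrite /post /postentry in_setT /= mem_rcons in_cons.
pose allm (th : tprof R Act) := [forall j, th j == mt j].
pose bt : bstrat R Act := fun th => if allm th then sig else pure R astar.
pose st : sstrat R Act := fun j _ => pure R astar j.
have Hbt_mixed : forall th j, is_mixed (bt th j).
  by move=> th j; rewrite /bt; case: ifP => _; [exact: Hsig | exact: pure_mixed].
have Hpl_mixed : forall th T, is_mprof (play bt st th T).
  by move=> th T; apply: play_mixed => // j; exact: pure_mixed.
have Hbt_inc : forall th, allm th = false -> bt th = pure R astar.
  by move=> th A; rewrite /bt A.
have Hplay_inc : forall th, allm th = false -> forall T, play bt st th T = pure R astar.
  move=> th A T; apply: functional_extensionality_dep => j.
  by rewrite /play Hbt_inc //; case: ifP.
have Hallm : forall th i, th i != mt i -> allm th = false.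
  move=> th i Hi; apply/negP => /forallP /(_ i) /eqP E.
  by move: Hi; rewrite E eqxx.
have Heqp : is_eq p post bt st.
  split.
  - by move=> th _ j; exact: Hbt_mixed.
  - by move=> i t _; exact: pure_mixed.
  - move=> th Hth i x Hx; case E: (th i == mt i).
      have Hc : forall y : mstrat R Act i, is_mixed y -> U_obs p bt st th y =
          \sum_(T : {set 'I_n} | T \subset ~: [set i]) pr p n.-1 #|T| * cm i.
        move=> y Hy; rewrite /U_obs; apply: eq_bigr => T _; congr (_ * _).
        apply: (mlin_dev_const astar); [|exact: Hy|exact: Hpl_mixed].
        by move=> a; rewrite (eqP E) /mt ffunE.
      by rewrite !Hc //; exact: Hbt_mixed.
    have A := Hallm th i (negbT E).
    have Hti : th i \in fsupp (mu i) by move: (Hth i); rewrite Hpost_supp E.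
    rewrite !(U_obs_pure _ _ (Hplay_inc _ A)) (Hbt_inc _ A).
    exact: Hinc.
  - move=> i t Ht x Hx; rewrite /U_nobs; case E: (t == mt i).
      apply: texp_le; first exact: post_wpos.
      move=> k; apply: ler_sum => T _; apply: ler_wpM2l; first exact/ltW/pr_gt0.
      have Hc2 : forall y : mstrat R Act i, is_mixed y ->
          mlin_dev t y (play bt st (tth (fun _ => t) k) T) = cm i.
        move=> y Hy; apply: (mlin_dev_const astar); [|exact: Hy|exact: Hpl_mixed].
        by move=> a; rewrite (eqP E) /mt ffunE.
      by rewrite !Hc2 //; exact: pure_mixed.
    have Hti : t \in fsupp (mu i) by move: Ht; rewrite Hpost_supp E.
    apply: texp_le; first exact: post_wpos.
    move=> k.
    have A : allm (tth (fun _ => t) k) = false.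
      apply: (Hallm _ i); rewrite tth_out ?E //.
      by rewrite !inE negbK.
    under eq_bigr => T _ do rewrite (Hplay_inc _ A).
    under [X in _ <= X]eq_bigr => T _ do rewrite (Hplay_inc _ A).
    exact: Hinc.
have Hnear : near etab mu b s bt st.
  split.
  - move=> th Hth i a.
    have A : allm th = false by apply: (Hallm _ i0); exact: Hne_mt.
    by rewrite (Hb_pure _ Hth) (Hbt_inc _ A) subrr normr0.
  - by move=> i t Ht a; rewrite /st (Hs_pure i t Ht) subrr normr0.
have Hallmt : allm mt by apply/forallP => i; exact: eqxx.
have Hfit : forall j t, t \in fsupp (mu j) ->
    avgfit pi p post bt st j t < avgfit pi p post bt st j (mt j).
  move=> j t Ht; rewrite /avgfit.
  pose V := \sum_(T : {set 'I_n}) pr p n #|T| * mlin (pi j) (pure R astar).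
  pose Gv := \sum_(T : {set 'I_n}) pr p n #|T| * mlin (pi j) (play bt st mt T).
  have HF1 : forall th, allm th ->
      \sum_(T : {set 'I_n}) pr p n #|T| * mlin (pi j) (play bt st th T) = Gv.
    move=> th A; apply: eq_bigr => T _; congr (_ * mlin _ _).
    apply: functional_extensionality_dep => i.
    by rewrite /play /bt A Hallmt.
  have HF2 : forall th, allm th = false ->
      \sum_(T : {set 'I_n}) pr p n #|T| * mlin (pi j) (play bt st th T) = V.
    by move=> th A; apply: eq_bigr => T _; rewrite Hplay_inc.
  have HGV : V < Gv.
    have HD : forall T, -(2*K) <= mlin (pi j) (play bt st mt T) - mlin (pi j) (pure R astar).
      move=> T; have h1 := HK j _ (Hpl_mixed mt T).
      have h2 := HK j _ (fun i => pure_mixed R astar i).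
      by move: h1 h2; rewrite !ler_norml => /andP [h1 _] /andP [_ h2]; lra.
    have Hsig0 : play bt st mt set0 = sig.
      by apply: functional_extensionality_dep => i; rewrite /play in_set0 /bt Hallmt.
    pose P := p ^+ n.-1.
    have P0 : 0 < P by exact: exprn_gt0.
    have pn : p ^+ n = p * P by rewrite /P -exprS prednK.
    pose u := P * (1 - p).
    have u0 : 0 <= u by apply: mulr_ge0; lra.
    have Hrest : forall T : {set 'I_n}, T != set0 -> - (u * (2 * K)) <=
        pr p n #|T| * (mlin (pi j) (play bt st mt T) - mlin (pi j) (pure R astar)).
      move=> T T0; have hk1 : (0 < #|T|)%N by rewrite card_gt0.
      have hk2 : (#|T| <= n)%N by apply: leq_trans (max_card T) _; rewrite card_ord.
      have hpr := pr_le ph p1 hk1 hk2.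
      have hpr0 := pr_gt0 n #|T| Hp.
      have hDT := HD T.
      rewrite -/P -/u in hpr; nra.
    have Hsum : Gv - V = \sum_(T : {set 'I_n}) pr p n #|T| *
        (mlin (pi j) (play bt st mt T) - mlin (pi j) (pure R astar)).
      by rewrite /Gv /V -sumrB; apply: eq_bigr => T _; rewrite mulrBr.
    rewrite (bigD1 set0) //= Hsig0 cards0 in Hsum.
    have H0 : pr p n 0 = p * P by rewrite /pr subn0 expr0 mulr1.
    rewrite H0 -/(d j) in Hsum.
    have Hr : - (u * (2 * K) * N2) <= \sum_(T : {set 'I_n} | T != set0) pr p n #|T| *
        (mlin (pi j) (play bt st mt T) - mlin (pi j) (pure R astar)).
      apply: le_trans (ler_sum _ Hrest).
      have N2e : N2 = 1 + \sum_(T : {set 'I_n} | T != set0) (1:R) by rewrite /N2 (bigD1 set0).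
      have Se : \sum_(T : {set 'I_n} | T != set0) (- (u * (2 * K))) =
          - (u * (2 * K)) * \sum_(T : {set 'I_n} | T != set0) (1:R).
        exact: sum_const_mul.
      have X0 : 0 <= u * (2 * K) by apply: mulr_ge0 => //; apply: mulr_ge0.
      by rewrite Se N2e; apply: arith1.
    have dj := deld j.
    have dj0 := dpos j.
    have Q0 : 0 < p * d j - (1 - p) * (2 * K) * N2.
      have E : (1 - p) * (2 * K) * N2 = (1 - p) * c / 2 by rewrite /c; field.
      rewrite E; nra.
    have E2 : p * P * d j - u * (2 * K) * N2 = P * (p * d j - (1 - p) * (2 * K) * N2).
      by rewrite /u; ring.
    have := mulr_gt0 P0 Q0; rewrite -E2; lra.
  have jS : j \notin ~: [set j] by rewrite !inE negbK.
  rewrite (texp_eq (G := fun _ => V)); last first.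
    move=> k; apply: HF2; apply: (Hallm _ j); rewrite tth_out //; exact: Hne_mt.
  rewrite (texp_const _ _ (fun _ => t) (fun _ => mt j)).
  have Hks : forall i, ((if i \in ~: [set j] then size (fsupp (mu i)) else 0) <
      (if i \in ~: [set j] then size (fsupp (post i)) else 1))%N.
    by move=> i; case: (i \in _) => //; rewrite /post /postentry in_setT /= size_rcons.
  pose kstar : kT post (~: [set j]) := finfun (fun i => Ordinal (Hks i)).
  have Htks : forall i, tth (fun _ => mt j) kstar i = mt i.
    move=> i; rewrite /tth ffunE /=; case: ifP => iS.
      by rewrite /post /postentry in_setT /= iS nth_rcons ltnn eqxx.
    by move/negbT: iS; rewrite !inE negbK => /eqP ->.
  apply: (texp_lt (k0 := kstar)); first exact: post_wpos.
    move=> k; case A: (allm (tth (fun _ => mt j) k)); last by rewrite HF2.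
    by rewrite HF1 // ltW.
  have A : allm (tth (fun _ => mt j) kstar) by apply/forallP => i; rewrite Htks.
  by rewrite HF1.
case: (Hcl bt st Heqp Hnear) => [[j _ Hj] | Hb2].
  have h1 := Hj (hd j) (hd_in j); have h2 := Hfit j (hd j) (hd_in j).
  by have := lt_trans h1 h2; rewrite ltxx.
have := Hb2 i0 (hd i0) (mt i0).
rewrite !Hpost_supp eqxx hd_in orbT => /(_ isT isT) E.
by have := Hfit i0 _ (hd_in i0); rewrite E ltxx.
Qed.
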